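(* There is an absolute constant $c>0$ such that for every integer $k\ge 2$, every strict subdivision of a graph of average degree at least $c\,k\log k$ contains, as an induced subgraph, a disjoint union of $k$ cycles (i.e., it is not $\mathcal{O}_k$-free).
   Context: All graphs are finite and simple. A strict subdivision of a graph $H$ is a graph obtained from $H$ by replacing each edge by a path with at least two edges (each edge is subdivided at least once), the new paths being internally disjoint. A graph $G$ is $\mathcal{O}_k$-free if it has no induced subgraph isomorphic to a disjoint union of $k$ cycles. *)

(* Defs.v *)
From Stdlib Require Import Reals.
From mathcomp Require Import all_boot.

Set Implicit Arguments.
Unset Strict Implicit.
Unset Printing Implicit Defensive.

Definition simple_graph (V : finType) (e : rel V) : Prop :=
  (forall x y, e x y = e y x) /\ (forall x, ~~ e x x).

Definition deg (V : finType) (e : rel V) (x : V) : nat := #|[set y | e x y]|.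

(* average degree = (sum of degrees) / |V|  (= 2|E|/|V|); 0 on the empty graph *)
Definition avg_degree (V : finType) (e : rel V) : R :=
  Rdiv (INR (\sum_(x : V) deg e x)) (INR #|V|).

(* G (edge relation eG) is a strict subdivision of H (edge relation eH):
   branch vertices f w for w in V(H); for each edge uv of H a path
   f u, P u v, f v in G with at least one internal vertex (>= 2 edges);
   internal vertices are distinct, avoid branch vertices, and are not shared
   between paths of different edges; G consists exactly of these paths. *)
Definition strict_subdivision (VH VG : finType) (eH : rel VH) (eG : rel VG) : Prop :=
  exists (f : VH -> VG) (P : VH -> VH -> seq VG),
    injective f /\
        (forall u v, eH u v -> P v u = rev (P u v)) /\
        (forall u v, eH u v -> P u v != [::]) /\
        (forall u v, eH u v -> uniq (P u v)) /\
        (forall u v x, eH u v -> x \in P u v -> forall w, f w != x) /\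
        (forall u v u' v' x, eH u v -> eH u' v' -> x \in P u v -> x \in P u' v' ->
            (u = u' /\ v = v') \/ (u = v' /\ v = u')) /\
        (forall x : VG, (exists w, f w = x) \/ (exists u v, eH u v /\ x \in P u v)) /\
        (forall x y : VG, eG x y <->
            exists u v, eH u v /\
              exists s1 s2, f u :: rcons (P u v) (f v) = s1 ++ x :: y :: s2).

Definition induces_cycle (V : finType) (e : rel V) (s : seq V) : Prop :=
  [/\ uniq s, 3 <= size s &
      forall x y, x \in s -> y \in s -> e x y = (next s x == y) || (next s y == x)].

Definition has_induced_k_cycles (V : finType) (e : rel V) (k : nat) : Prop :=
  exists C : 'I_k -> seq V,
    (forall i, induces_cycle e (C i)) /\
    (forall i j, i != j -> forall x y, x \in C i -> y \in C j -> x != y /\ ~~ e x y).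

(* Main.v *)
Require Import Defs.
From Stdlib Require Import Reals Lra Classical.
From mathcomp Require Import all_boot zify.
Set Implicit Arguments.
Unset Strict Implicit.
Unset Printing Implicit Defensive.


Definition SW (V : finType) (e : rel V) (W : {set V}) : nat :=
  \sum_(x in W) \sum_(y in W) e x y.

Definition cyc (V : finType) (e : rel V) (s : seq V) : bool :=
  [&& uniq s, 2 < size s & cycle e s].

Lemma decomp (V : finType) (e : rel V) (W D : {set V}) :
  (forall x y, e x y = e y x) -> D \subset W ->
  SW e W = SW e (W :\: D) + \sum_(y in W) \sum_(x in D) e y x
           + \sum_(y in W :\: D) \sum_(x in D) e y x.
Proof.
move=> sym sDW; rewrite /SW.
have E1 : forall x, \sum_(y in W) (e x y : nat) =
   \sum_(y in D) (e x y : nat) + \sum_(y in W :\: D) (e x y : nat).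
  by move=> x; rewrite (big_setID D) /= (setIidPr sDW).
rewrite (eq_bigr _ (fun x _ => E1 x)) big_split /=.
rewrite [X in _ + X](big_setID D) /= (setIidPr sDW).
rewrite [\sum_(x in D) _]exchange_big /=.
under [X in _ + (X + _)]eq_bigr => y _ do under eq_bigr => x _ do rewrite sym.
lia.
Qed.

Lemma sum_count (V : finType) (P : pred V) (s : seq V) :
  uniq s -> \sum_(x in [set z in s]) (P x : nat) = count P s.
Proof.
move=> us; rewrite (eq_bigl (mem s)); last by move=> x; rewrite inE.
rewrite -big_uniq //.
elim: s {us} => [|a s IH]; first by rewrite big_nil.
by rewrite big_cons IH.
Qed.


Lemma cyc_of (V : finType) (e : rel V) y u :
  y \notin u -> uniq u -> 1 < size u -> path e y u -> e (last y u) y ->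
  cyc e (y :: u).
Proof.
move=> yu uu su pu ly.
by rewrite /cyc /= yu uu /= rcons_path pu ly /= andbT.
Qed.

Lemma split_first (T : Type) (P : pred T) (t : seq T) :
  0 < count P t -> exists t0 a r, [/\ t = t0 ++ a :: r, P a & count P t0 = 0].
Proof.
elim: t => [|x t IH] //=.
case Px: (P x) => /= h.
  by exists [::], x, t.
have [t0 [a [r [-> Pa c0]]]] := IH h.
by exists (x :: t0), a, r; rewrite /= Px c0.
Qed.

Lemma short4 (V : finType) (e : rel V) (sym : forall x y, e x y = e y x) t y :
  uniq t -> y \notin t -> sorted e t -> 3 < count (e y) t ->
  exists c, [/\ cyc e c, size c < size t & {subset c <= y :: t}].
Proof.
move=> ut yt st ct.
have [t0 [a [r [dt ya c0]]]] := split_first (leq_trans (isT : 0 < 4) ct).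
have cr : 2 < count (e y) r.
  move: ct; rewrite dt count_cat c0 /= ya; lia.
have [r1 [b [r' [dr yb c1]]]] := split_first (leq_trans (isT : 0 < 3) cr).
have cr' : 1 < count (e y) r'.
  move: cr; rewrite dr count_cat c1 /= yb; lia.
have sr' := count_size (e y) r'.
subst t r.
exists (y :: a :: rcons r1 b); split.
- apply: cyc_of.
  + move: yt; rewrite !mem_cat !inE mem_rcons !inE !mem_cat !inE.
    by apply: contra => /or3P [->|->|->]; rewrite ?orbT.
  + move: ut; rewrite cat_uniq => /and3P [_ _].
    rewrite /= cat_uniq /= -cats1 cat_uniq /= !mem_cat !inE.
    case/andP=> H1 /and3P [u1 H2 /andP [H3 _]].
    rewrite u1 /= andbT.
    by move: H1 H2; case: (a \in r1); case: (a == b); case: (b \in r1).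
  + by rewrite /= size_rcons.
  + rewrite /= ya /= rcons_path.
    move: st; rewrite sorted_cat_cons => /andP [_].
    by rewrite cat_path => /andP [-> /=] /andP [-> _].
  + by rewrite /= last_rcons sym.
- rewrite /= size_rcons !size_cat /= size_cat /=; lia.
- move=> z; rewrite !inE mem_rcons !inE !mem_cat !inE.
  by rewrite mem_cat inE; case/or4P => ->; rewrite ?orbT.
Qed.


Definition cycin (V : finType) (e : rel V) (W : {set V}) (s : seq V) : bool :=
  cyc e s && all (fun x => x \in W) s.

Lemma shortest (V : finType) (e : rel V) (W : {set V}) :
  (exists s, cycin e W s) ->
  exists s, cycin e W s /\ forall t, cycin e W t -> size s <= size t.
Proof.
move=> [s hs].
suff: forall n s, cycin e W s -> size s <= n ->
  exists s, cycin e W s /\ forall t, cycin e W t -> size s <= size t.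
  by move=> /(_ (size s) s hs (leqnn _)).
elim=> [|n IH] {hs}s hs sn.
  by move: hs sn; rewrite /cycin /cyc => /andP [/and3P [_ h _] _]; lia.
case: (classic (exists t, cycin e W t /\ size t < size s)).
  by move=> [t [ht st]]; apply: (IH t ht); lia.
move=> H; exists s; split=> // t ht.
rewrite leqNgt; apply/negP => st; apply: H; by exists t.
Qed.

Lemma nb3 (V : finType) (e : rel V) (sym : forall x y, e x y = e y x)
  (irr : forall x, ~~ e x x) (W : {set V}) s y :
  cycin e W s -> (forall t, cycin e W t -> size s <= size t) -> y \in W ->
  count (e y) s <= 3.
Proof.
move=> hs mins yW; rewrite leqNgt; apply/negP => ct.
have /andP [/and3P [us ss cs] aW] := hs.
case: (boolP (y \in s)) => ys.
  have rs := rot_index ys.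
  set t := drop _ _ ++ _ in rs.
  have ut : uniq (y :: t) by rewrite -rs rot_uniq.
  have ct' : cycle e (y :: t) by rewrite -rs rot_cycle.
  have ctt : 3 < count (e y) t.
    have E : count (e y) (rot (index y s) s) = count (e y) s.
      by rewrite /rot count_cat addnC -count_cat cat_take_drop.
    move: ct; rewrite -E rs /=.
    by rewrite (negbTE (irr y)).
  have st : sorted e t.
    by move: ct'; rewrite /= rcons_path => /andP [/path_sorted].
  move: ut => /= /andP [yt ut].
  have [c [hc sc subc]] := short4 sym ut yt st ctt.
  have : size s <= size c.
    apply: mins; rewrite /cycin hc /=; apply/allP => z /subc.
    rewrite -rs mem_rot => zs; exact: (allP aW).
  have : size s = (size t).+1 by rewrite -(size_rot (index y s)) rs.
  lia.
have st : sorted e s.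
  by move: cs; case: (s) => // a l; rewrite /= rcons_path => /andP [].
have [c [hc sc subc]] := short4 sym us ys st ct.
have : size s <= size c.
  apply: mins; rewrite /cycin hc /=; apply/allP => z /subc.
  rewrite inE => /orP [/eqP -> //|zs]; exact: (allP aW).
by rewrite leqNgt sc.
Qed.


Lemma no_out (V : finType) (e : rel V) (sym : forall x y, e x y = e y x)
  (irr : forall x, ~~ e x x) (W : {set V}) x q :
  2 <= \sum_(y in W) e x y ->
  uniq (x :: q) -> all (fun x => x \in W) (x :: q) -> sorted e (x :: q) ->
  (forall y, y \in W -> e x y -> y \in x :: q) ->
  exists c, cycin e W c.
Proof.
move=> d2 up aW sp hin.
have : \sum_(y in W) (e x y : nat) <= count (e x) (x :: q).
  rewrite -sum_count // big_mkcond [X in _ <= X]big_mkcond /=.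
  apply: leq_sum => y _; rewrite inE.
  case yW: (y \in W) => //; case exy: (e x y) => //.
  by rewrite (hin y yW exy).
rewrite /= (negbTE (irr x)) add0n => cq.
have {d2}cq := leq_trans d2 cq.
case: q up aW sp hin cq => [|b q'] //= up aW sp hin cq.
have c1 : 0 < count (e x) q' by move: cq; case: (e x b) => /=; lia.
have [m1 [z [m2 [dq xz _]]]] := split_first c1.
subst q'.
exists (x :: b :: rcons m1 z); rewrite /cycin; apply/andP; split.
  apply: cyc_of.
  - move: up; rewrite !inE mem_rcons !inE.
    move=> /and3P [H _ _]; move: H; rewrite mem_cat inE. by case: (x==b); case: (x==z); case: (x \in m1); case: (x \in m2).
  - move: up => /andP [_] /andP [].
    rewrite mem_cat inE /= -cats1 cat_uniq cat_uniq /= !mem_cat !inE.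
    move=> H1 /and3P [u1 H2 _].
    rewrite u1 /= andbT.
    by move: H1 H2; case: (b \in m1); case: (b == z); case: (z \in m1).
  - by rewrite /= size_rcons.
  - move: sp; rewrite /= cat_path rcons_path => /andP [-> /andP [-> /=]].
    by case/andP.
  - by rewrite /= last_rcons sym.
apply/allP => y; rewrite !inE mem_rcons !inE => H.
have aW2 : all (fun x => x \in W) (x :: b :: m1 ++ z :: m2) by exact: aW.
apply: (allP aW2); rewrite !inE mem_cat !inE.
by case/or4P: H => ->; rewrite ?orbT.
Qed.

Lemma path_cycle (V : finType) (e : rel V) (sym : forall x y, e x y = e y x)
  (irr : forall x, ~~ e x x) (W : {set V}) :
  (forall x, x \in W -> 2 <= \sum_(y in W) e x y) ->
  forall p, p != [::] -> uniq p -> all (fun x => x \in W) p -> sorted e p ->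
  exists c, cycin e W c.
Proof.
move=> deg2.
suff: forall n p, #|W| - size p <= n -> p != [::] -> uniq p ->
  all (fun x => x \in W) p -> sorted e p -> exists c, cycin e W c.
  by move=> H p; apply: (H _ p (leqnn _)).
elim=> [|n IH] [|x q] // hn _ up aW sp;
  (case: (boolP [exists y in W, e x y && (y \notin x :: q)]);
   last first; [move=> H; apply: (no_out sym irr (deg2 x _) up aW sp) |]).
- by apply: (allP aW); rewrite inE eqxx.
- move=> y yW exy; apply/negPn; apply: contra H => yq.
  by apply/existsP; exists y; rewrite yW exy.
- move=> /existsP [y /and3P [yW exy yq]].
  have : size (y :: x :: q) <= #|W|.
    rewrite cardE; apply: uniq_leq_size; first by rewrite cons_uniq yq up.
    move=> z; rewrite mem_enum inE => /orP [/eqP -> //|]; exact: (allP aW).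
  move: hn => /=; lia.
- by apply: (allP aW); rewrite inE eqxx.
- move=> y yW exy; apply/negPn; apply: contra H => yq.
  by apply/existsP; exists y; rewrite yW exy.
- move=> /existsP [y /and3P [yW exy yq]].
  apply: (IH (y :: x :: q)) => //.
  + have : size (y :: x :: q) <= #|W|.
      rewrite cardE; apply: uniq_leq_size; first by rewrite cons_uniq yq up.
      move=> z; rewrite mem_enum inE => /orP [/eqP -> //|]; exact: (allP aW).
    move: hn => /=; lia.
  + by rewrite cons_uniq yq up.
  + by rewrite /= yW; exact: aW.
  + by rewrite /= sym exy.
Qed.


Lemma cycin_sub (V : finType) (e : rel V) (W W' : {set V}) c :
  W' \subset W -> cycin e W' c -> cycin e W c.
Proof.
move=> sW /andP [hc aW]; rewrite /cycin hc /=; apply/allP => z zc.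
exact: (subsetP sW _ (allP aW z zc)).
Qed.

Lemma sum_subW (V : finType) (F : V -> nat) (W D : {set V}) :
  \sum_(y in W :\: D) F y <= \sum_(y in W) F y.
Proof. by rewrite [X in _ <= X](big_setID D) /= leq_addl. Qed.

Lemma SW_set0 (V : finType) (e : rel V) : SW e set0 = 0.
Proof. by rewrite /SW big_set0. Qed.

Lemma cyc_exists (V : finType) (e : rel V) (sym : forall x y, e x y = e y x)
  (irr : forall x, ~~ e x x) :
  forall n (W : {set V}), #|W| <= n -> 0 < #|W| -> 2 * #|W| <= SW e W ->
  exists c, cycin e W c.
Proof.
elim=> [|n IH] W hn W0 hS; first by move: hn W0; lia.
case: (boolP [exists v in W, \sum_(y in W) e v y < 2]).
  move=> /existsP [v /andP [vW dv]].
  have sDW : [set v] \subset W by rewrite sub1set.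
  have := decomp sym sDW.
  rewrite (eq_bigr (fun y => (e y v : nat))); last by move=> y _; rewrite big_set1.
  rewrite [X in _ = _ + _ + X](eq_bigr (fun y => (e y v : nat))); last first.
    by move=> y _; rewrite big_set1.
  have E : \sum_(y in W) (e y v : nat) = \sum_(y in W) (e v y : nat).
    by apply: eq_bigr => y _; rewrite sym.
  have := sum_subW (fun y => (e y v : nat)) W [set v].
  rewrite E => h1 hdec.
  have cW := cardsD1 v W; rewrite vW in cW.
  have W'sub : W :\: [set v] \subset W by apply: subsetDl.
  case: (posnP #|W :\: [set v]|) => W'0.
    move: hdec; rewrite (cards0_eq W'0) SW_set0 big_set0 => hdec.
    move: hS dv W0; rewrite hdec; lia.
  have [c hc] : exists c, cycin e (W :\: [set v]) c.
    apply: IH => //.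
      move: hn; rewrite cW; lia.
    move: hS dv h1; rewrite hdec cW; lia.
  by exists c; apply: cycin_sub hc.
rewrite negb_exists => /forallP hall.
have [v0 v0W] : exists v0, v0 \in W by apply/set0Pn; rewrite -card_gt0.
apply: (path_cycle sym irr _ (p := [:: v0])) => //=.
  move=> x xW; have := hall x; rewrite xW /=; lia.
by rewrite v0W.
Qed.


Lemma remove_bound (V : finType) (e : rel V) (sym : forall x y, e x y = e y x)
  (irr : forall x, ~~ e x x) (W : {set V}) s :
  cycin e W s -> (forall t, cycin e W t -> size s <= size t) ->
  SW e W <= SW e (W :\: [set z in s]) + 6 * #|W|.
Proof.
move=> hs mins.
have sDW : [set z in s] \subset W.
  by apply/subsetP => z; rewrite inE; move: hs => /andP [_ /allP]; apply.
have us : uniq s by move: hs => /andP [/and3P []].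
rewrite (decomp sym sDW).
have A : \sum_(y in W) \sum_(x in [set z in s]) (e y x : nat) <= 3 * #|W|.
  rewrite mulnC -sum_nat_const; apply: leq_sum => y yW.
  rewrite sum_count //; exact: (nb3 sym irr hs mins yW).
have := sum_subW (fun y => \sum_(x in [set z in s]) (e y x : nat)) W [set z in s].
lia.
Qed.

Lemma kcycles (V : finType) (e : rel V) (sym : forall x y, e x y = e y x)
  (irr : forall x, ~~ e x x) :
  forall k (W : {set V}), (6 * k + 2) * #|W| <= SW e W -> 0 < #|W| ->
  exists cs : seq (seq V), [/\ size cs = k.+1, all (cycin e W) cs &
    forall i j, i < j -> j < k.+1 ->
      forall x, x \in nth [::] cs i -> x \notin nth [::] cs j].
Proof.
move=> k W hS W0.
have hS2 : 2 * #|W| <= SW e W by move: hS; lia.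
have [c0 hc0] := cyc_exists sym irr (leqnn #|W|) W0 hS2.
have [s [hs mins]] := shortest (ex_intro _ c0 hc0).
elim: k W hS W0 hS2 c0 hc0 s hs mins => [|k IH] W hS W0 hS2 c0 hc0 s hs mins.
  exists [:: s]; split => //=; [by rewrite hs | by move=> i [|j]].
have hR := remove_bound sym irr hs mins.
set W' := W :\: [set z in s] in hR.
have cW' : #|W'| <= #|W| by apply: subset_leq_card; apply: subsetDl.
case: (posnP #|W'|) => W'0.
  move: hR; rewrite (cards0_eq W'0) SW_set0; move: hS W0; lia.
have hS' : (6 * k + 2) * #|W'| <= SW e W'.
  apply: leq_trans (_ : (6 * k + 2) * #|W| <= _); first by rewrite leq_mul2l cW' orbT.
  move: hS hR; lia.
have hS2' : 2 * #|W'| <= SW e W' by move: hS'; lia.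
have [c1 hc1] := cyc_exists sym irr (leqnn #|W'|) W'0 hS2'.
have [s1 [hs1 mins1]] := shortest (ex_intro _ c1 hc1).
have [cs [sz acs disj]] := IH W' hS' W'0 hS2' c1 hc1 s1 hs1 mins1.
exists (s :: cs); split.
- by rewrite /= sz.
- rewrite /= hs /=; apply/allP => c cc.
  exact: (cycin_sub (subsetDl W _) (allP acs c cc)).
- move=> [|i] [|j] // ij jk x /=.
    move=> xs; apply/negP => xc.
    have : nth [::] cs j \in cs by rewrite mem_nth // sz.
    move=> /(allP acs) /andP [_ /allP /(_ x xc)].
    by rewrite /W' !inE xs.
  exact: disj.
Qed.


Definition chunk (VH VG : finType) (f : VH -> VG) (P : VH -> VH -> seq VG)
  (s : seq VH) (x : VH) : seq VG := f x :: P x (next s x).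

Definition TG (VH VG : finType) (f : VH -> VG) (P : VH -> VH -> seq VG)
  (s : seq VH) : seq VG := flatten (map (chunk f P s) s).

Lemma next_cat (T : eqType) (s1 s2 : seq T) x y :
  uniq (s1 ++ x :: y :: s2) -> next (s1 ++ x :: y :: s2) x = y.
Proof.
case: s1 => [|a s1] u; first by rewrite /= eqxx.
rewrite next_nth.
have -> : x \in (a :: s1) ++ [:: x, y & s2] by rewrite mem_cat !inE eqxx !orbT.
move: u; rewrite cat_uniq => /and3P [_ /hasPn H _].
have xs1 : x \notin a :: s1 by apply: H; rewrite inE eqxx.
rewrite index_cat (negbTE xs1) /= eqxx addn0 nth_cat ltnNge leqnSn /= subSn // subnn.
by [].
Qed.


Lemma mem_TG (VH VG : finType) (f : VH -> VG) P s z :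
  z \in TG f P s -> exists2 w, w \in s & (z = f w \/ z \in P w (next s w)).
Proof.
move/flatten_mapP => [w ws]; rewrite /chunk inE => /orP [/eqP ->|h];
  exists w => //; by [left | right].
Qed.

Lemma TG_f (VH VG : finType) (f : VH -> VG) P s w :
  w \in s -> f w \in TG f P s.
Proof. by move=> ws; apply/flatten_mapP; exists w; rewrite // inE eqxx. Qed.

Lemma TG_P (VH VG : finType) (f : VH -> VG) P s w z :
  w \in s -> z \in P w (next s w) -> z \in TG f P s.
Proof. by move=> ws zP; apply/flatten_mapP; exists w; rewrite // inE zP orbT. Qed.

Lemma flatten_rot (T : Type) n (L : seq (seq T)) :
  exists m, flatten (rot n L) = rot m (flatten L).
Proof.
exists (size (flatten (take n L))).
have -> : flatten L = flatten (take n L) ++ flatten (drop n L) by rewrite -flatten_cat cat_take_drop.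
by rewrite {1}/rot flatten_cat rot_size_cat.
Qed.

Lemma TG_rot (VH VG : finType) (f : VH -> VG) P s n :
  uniq s -> exists m, TG f P (rot n s) = rot m (TG f P s).
Proof.
move=> us; rewrite /TG.
have -> : map (chunk f P (rot n s)) (rot n s) = rot n (map (chunk f P s) s).
  by rewrite map_rot; congr rot; apply: eq_map => x; rewrite /chunk next_rot.
exact: flatten_rot.
Qed.

Lemma TG_head (VH VG : finType) (f : VH -> VG) P s w :
  uniq s -> 1 < size s -> w \in s -> exists m rest,
  rot m (TG f P s) = (f w :: rcons (P w (next s w)) (f (next s w))) ++ rest.
Proof.
move=> us ss ws.
have [m hm] := TG_rot f P (index w s) us.
have rs := rot_index ws.
set t := drop _ _ ++ _ in rs.
have st : size t = (size s).-1 by rewrite -(size_rot (index w s) s) rs.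
case: t rs st => [|w' t'] rs st; first by move: ss st => /=; lia.
have nw : next s w = w'.
  rewrite -(next_rot (index w s) us) rs.
  by apply: (next_cat (s1 := [::])); rewrite -rs rot_uniq.
exists m, (P w' (next s w') ++ flatten (map (chunk f P s) t')).
rewrite -hm /TG.
have E : chunk f P (rot (index w s) s) =1 chunk f P s.
  by move=> x; rewrite /chunk next_rot.
rewrite (eq_map E) rs.
have -> : flatten (map (chunk f P s) [:: w, w' & t']) =
  chunk f P s w ++ chunk f P s w' ++ flatten (map (chunk f P s) t') by [].
by rewrite /chunk nw /= cat_rcons.
Qed.


Lemma uniq_flat (T1 T2 : eqType) (F : T1 -> seq T2) (s : seq T1) :
  uniq s -> (forall x, x \in s -> uniq (F x)) ->
  (forall x y, x \in s -> y \in s -> x != y -> forall z, z \in F x -> z \notin F y) ->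
  uniq (flatten (map F s)).
Proof.
elim: s => [|a s IH] //= /andP [as_ us] hu hd.
rewrite cat_uniq hu ?inE ?eqxx //=; apply/andP; split.
  apply/hasPn => z /flatten_mapP [b bs zb]; apply/negP => za.
  have := hd a b; rewrite !inE eqxx bs orbT => /(_ isT isT).
  have ab : a != b by apply: contraNneq as_ => ->.
  by move=> /(_ ab z za); rewrite zb.
apply: IH => // [x xs|x y xs ys xy]; first by apply: hu; rewrite inE xs orbT.
by apply: hd; rewrite // inE ?xs ?ys orbT.
Qed.

Lemma size_flat (T1 T2 : Type) (F : T1 -> seq T2) (s : seq T1) :
  (forall x, 0 < size (F x)) -> size s <= size (flatten (map F s)).
Proof.
move=> h; elim: s => [|a s IH] //=; rewrite size_cat; have := h a; lia.
Qed.

Lemma nn (T : eqType) (s : seq T) w :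
  uniq s -> 2 < size s -> w \in s -> next s (next s w) != w.
Proof.
move=> us ss ws.
have rs := rot_index ws.
set t := drop _ _ ++ _ in rs.
have st : size t = (size s).-1 by rewrite -(size_rot (index w s) s) rs.
have ur : uniq (rot (index w s) s) by rewrite rot_uniq.
case: t rs st => [|a [|b t']] rs st; try by move: ss st => /=; lia.
rewrite -!(next_rot (index w s) us) rs.
have u' := ur; rewrite rs in u'.
rewrite (next_cat (s1 := [::]) u').
rewrite (_ : next _ a = b); last exact: (next_cat (s1 := [:: w]) u').
move: u' => /andP [wn _]; apply: contraNneq wn => ->; by rewrite !inE eqxx orbT.
Qed.


Record SD (VH VG : finType) (eH : rel VH) (eG : rel VG) (f : VH -> VG)
  (P : VH -> VH -> seq VG) : Prop := {
  sd_inj : injective f;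
  sd_rev : forall u v, eH u v -> P v u = rev (P u v);
  sd_ne : forall u v, eH u v -> P u v != [::];
  sd_uniq : forall u v, eH u v -> uniq (P u v);
  sd_f : forall u v x, eH u v -> x \in P u v -> forall w, f w != x;
  sd_un : forall u v u' v' x, eH u v -> eH u' v' -> x \in P u v -> x \in P u' v' ->
            (u = u' /\ v = v') \/ (u = v' /\ v = u');
  sd_edge : forall x y : VG, eG x y <->
            exists u v, eH u v /\
              exists s1 s2, f u :: rcons (P u v) (f v) = s1 ++ x :: y :: s2 }.

Lemma in_split (T : eqType) (l : seq T) x : x \in l -> exists p1 p2, l = p1 ++ x :: p2.
Proof.
elim: l => [|a l IH] //; rewrite inE => /orP [/eqP <-|xl].
  by exists [::], l.
by have [p1 [p2 ->]] := IH xl; exists (a :: p1), p2.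
Qed.

Lemma next_rot_cat (T : eqType) (L rest s1 s2 : seq T) m x y :
  uniq L -> rot m L = (s1 ++ x :: y :: s2) ++ rest -> next L x = y.
Proof.
move=> uL hr; rewrite -(next_rot m uL) hr.
have E : (s1 ++ [:: x, y & s2]) ++ rest = s1 ++ [:: x, y & s2 ++ rest].
  by rewrite -catA.
rewrite E; apply: next_cat; by rewrite -E -hr rot_uniq.
Qed.

Lemma cyc_size (V : finType) (e : rel V) s : cyc e s -> 2 < size s.
Proof. by case/and3P. Qed.

Lemma cyc_uniq (V : finType) (e : rel V) s : cyc e s -> uniq s.
Proof. by case/and3P. Qed.

Lemma cyc_edge (V : finType) (e : rel V) s w : cyc e s -> w \in s -> e w (next s w).
Proof. by case/and3P => _ _ cs ws; apply: next_cycle. Qed.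


Lemma uniq_TG (VH VG : finType) (eH : rel VH) (eG : rel VG) f P (s : seq VH) :
  @SD VH VG eH eG f P -> cyc eH s -> uniq (TG f P s).
Proof.
move=> sd cs; apply: uniq_flat; first exact: cyc_uniq cs.
  move=> x xs; rewrite /chunk /= (sd_uniq sd) ?andbT //; last exact: cyc_edge.
  apply/negP => fx; exact: (negP (sd_f sd (cyc_edge cs xs) fx x) (eqxx _)).
move=> x y xs ys xy z; rewrite /chunk !inE => /orP [/eqP ->|zx]; apply/negP => /orP [/eqP fy|zy].
- by move: xy; rewrite (sd_inj sd fy) eqxx.
- by move: (sd_f sd (cyc_edge cs ys) zy x); rewrite eqxx.
- by move: (sd_f sd (cyc_edge cs xs) zx y); rewrite fy eqxx.
have [[ex ey]|[ex ey]] := sd_un sd (cyc_edge cs xs) (cyc_edge cs ys) zx zy.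
  by move: xy; rewrite ex eqxx.
have := nn (cyc_uniq cs) (cyc_size cs) ys.
by rewrite -ex ey eqxx.
Qed.

Lemma succ_edge (VH VG : finType) (eH : rel VH) (eG : rel VG) f P (s : seq VH) x :
  SD eH eG f P -> cyc eH s -> x \in TG f P s -> eG x (next (TG f P s) x).
Proof.
move=> sd cs xT.
have [w ws hx] := mem_TG xT.
have [m [rest hr]] := TG_head f P (cyc_uniq cs) (ltnW (cyc_size cs)) ws.
have xl : x \in f w :: P w (next s w).
  by case: hx => [->|h]; rewrite inE ?eqxx ?h ?orbT.
have [p1 [p2 hp]] := in_split xl.
set w' := next s w in hr hp.
have hL : f w :: rcons (P w w') (f w') = p1 ++ x :: rcons p2 (f w').
  by rewrite -rcons_cons hp rcons_cat.
set y := head (f w') p2.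
have [s2 hs2] : exists s2, rcons p2 (f w') = y :: s2.
  by rewrite /y; case: (p2) => [|b p2']; [exists [::] | exists (rcons p2' (f w'))].
rewrite hs2 in hL.
rewrite hL in hr.
rewrite (next_rot_cat (uniq_TG sd cs) hr).
apply/(sd_edge sd); exists w, w'; split; first exact: cyc_edge.
by exists p1, s2.
Qed.

Lemma pred_edge (VH VG : finType) (eH : rel VH) (eG : rel VG) f P (s : seq VH)
  x y u v s1 s2 :
  SD eH eG f P -> cyc eH s -> x \in TG f P s -> eH u v -> x \in P u v ->
  f u :: rcons (P u v) (f v) = s1 ++ x :: y :: s2 ->
  (next (TG f P s) x == y) || (next (TG f P s) y == x).
Proof.
move=> sd cs xT euv xP hL.
have [w ws [hx|hx]] := mem_TG xT.
  by move: (sd_f sd euv xP w); rewrite hx eqxx.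
have [m [rest hr]] := TG_head f P (cyc_uniq cs) (ltnW (cyc_size cs)) ws.
have eww := cyc_edge cs ws.
have [[eu ev]|[eu ev]] := sd_un sd euv eww xP hx.
  subst u v; rewrite hL in hr.
  by rewrite (next_rot_cat (uniq_TG sd cs) hr) eqxx.
subst u v.
have E : f w :: rcons (P w (next s w)) (f (next s w)) = rev s2 ++ y :: x :: rev s1.
  have E0 : f (next s w) :: rcons (P (next s w) w) (f w) =
            rev (f w :: rcons (P w (next s w)) (f (next s w))).
    by rewrite (sd_rev sd eww) rev_cons rev_rcons.
  rewrite E0 in hL.
  rewrite -[LHS]revK hL rev_cat /= rev_cons rev_cons -!cats1 -!catA.
  by [].
rewrite E in hr.
by rewrite (next_rot_cat (uniq_TG sd cs) hr) eqxx orbT.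
Qed.

Lemma rcons_mid (T : eqType) (Q A B : seq T) (z x y : T) :
  rcons Q z = A ++ x :: y :: B -> x \in Q.
Proof.
elim: A Q => [|a A IH] [|q Q] //=.
- by case=> -> _; rewrite inE eqxx.
- by case=> _; case: A {IH}.
- by case=> _ /IH h; rewrite inE h orbT.
Qed.

Lemma internal_of_edge (T : eqType) (Q s1 s2 : seq T) a b x y :
  a :: rcons Q b = s1 ++ x :: y :: s2 -> Q != [::] -> x \in Q \/ y \in Q.
Proof.
case: s1 => [|c s1] /=.
  case: Q => [|q Q] //= [_ -> _] _; by right; rewrite inE eqxx.
by case=> _ /rcons_mid h _; left.
Qed.

Lemma path_in_TG (VH VG : finType) (eH : rel VH) (eG : rel VG) f P (s : seq VH) w u v z :
  SD eH eG f P -> cyc eH s -> w \in s ->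
  (u = w /\ v = next s w) \/ (u = next s w /\ v = w) ->
  z \in f u :: rcons (P u v) (f v) -> z \in TG f P s.
Proof.
move=> sd cs ws huv.
have ws' : next s w \in s by rewrite mem_next.
have eww := cyc_edge cs ws.
have HP : forall z, z \in P u v -> z \in TG f P s.
  move=> z'; case: huv => [[-> ->]|[-> ->]]; first exact: TG_P.
  by rewrite (sd_rev sd eww) mem_rev; exact: TG_P.
rewrite inE mem_rcons inE => /or3P [/eqP ->|/eqP ->|/HP //].
- by case: huv => [[-> _]|[-> _]]; apply: TG_f.
- by case: huv => [[_ ->]|[_ ->]]; apply: TG_f.
Qed.

Lemma TG_disj (VH VG : finType) (eH : rel VH) (eG : rel VG) f P (s1 s2 : seq VH) x y :
  SD eH eG f P -> cyc eH s1 -> cyc eH s2 -> (forall z, z \in s1 -> z \notin s2) ->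
  x \in TG f P s1 -> y \in TG f P s2 -> x != y.
Proof.
move=> sd c1 c2 dj xT yT; apply/eqP => exy; subst y.
have [w1 w1s h1] := mem_TG xT.
have [w2 w2s h2] := mem_TG yT.
have e1 := cyc_edge c1 w1s; have e2 := cyc_edge c2 w2s.
case: h1 => [hx1|hx1]; case: h2 => [hx2|hx2].
- move: hx1; rewrite hx2 => /(sd_inj sd) ew.
  by move: (dj _ w1s); rewrite -ew w2s.
- by move: (sd_f sd e2 hx2 w1); rewrite hx1 eqxx.
- by move: (sd_f sd e1 hx1 w2); rewrite hx2 eqxx.
have [[ew _]|[ew _]] := sd_un sd e1 e2 hx1 hx2.
  by move: (dj _ w1s); rewrite ew w2s.
by move: (dj _ w1s); rewrite ew mem_next w2s.
Qed.


Lemma edge_stays (VH VG : finType) (eH : rel VH) (eG : rel VG) f P (s : seq VH) x u v z :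
  SD eH eG f P -> cyc eH s -> x \in TG f P s -> eH u v -> x \in P u v ->
  z \in f u :: rcons (P u v) (f v) -> z \in TG f P s.
Proof.
move=> sd cs xT euv xP.
have [w ws [hx|hx]] := mem_TG xT.
  by move: (sd_f sd euv xP w); rewrite hx eqxx.
have eww := cyc_edge cs ws.
have huv := sd_un sd euv eww xP hx.
apply: (path_in_TG sd cs ws).
by case: huv => [[-> ->]|[-> ->]]; [left|right].
Qed.

Lemma edge_decomp (VH VG : finType) (eH : rel VH) (eG : rel VG) f P x y :
  (forall a b, eH a b = eH b a) -> SD eH eG f P -> eG x y -> exists u v s1 s2,
   [/\ eH u v, x \in P u v & f u :: rcons (P u v) (f v) = s1 ++ x :: y :: s2] \/
   [/\ eH u v, y \in P u v & f u :: rcons (P u v) (f v) = s1 ++ y :: x :: s2].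
Proof.
move=> symH sd /(sd_edge sd) [u [v [euv [s1 [s2 hL]]]]].
have [xP|yP] := internal_of_edge hL (sd_ne sd euv).
  by exists u, v, s1, s2; left.
exists v, u, (rev s2), (rev s1); right; split.
- by rewrite symH.
- by rewrite (sd_rev sd euv) mem_rev.
- rewrite (sd_rev sd euv).
  have : rev (f u :: rcons (P u v) (f v)) = rev (s1 ++ x :: y :: s2) by rewrite hL.
  rewrite rev_cons rev_rcons rev_cat /= rev_cons rev_cons -!cats1 -!catA /=.
  by [].
Qed.

Lemma TG_induced (VH VG : finType) (eH : rel VH) (eG : rel VG) f P (s : seq VH) :
  (forall a b, eH a b = eH b a) -> (forall a b, eG a b = eG b a) ->
  SD eH eG f P -> cyc eH s -> induces_cycle eG (TG f P s).
Proof.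
move=> symH symG sd cs; split.
- exact: uniq_TG sd cs.
- apply: leq_trans (cyc_size cs) _; apply: size_flat => x; by [].
move=> x y xT yT; apply/idP/idP.
  move=> /(edge_decomp symH sd) [u [v [s1 [s2 [[euv xP hL]|[euv yP hL]]]]]].
    exact: pred_edge sd cs xT euv xP hL.
  by rewrite orbC; exact: pred_edge sd cs yT euv yP hL.
case/orP => /eqP <-; first exact: (succ_edge sd cs xT).
by rewrite symG; exact: (succ_edge sd cs yT).
Qed.

Lemma TG_nonadj (VH VG : finType) (eH : rel VH) (eG : rel VG) f P (s1 s2 : seq VH) x y :
  (forall a b, eH a b = eH b a) ->
  SD eH eG f P -> cyc eH s1 -> cyc eH s2 -> (forall z, z \in s1 -> z \notin s2) ->
  x \in TG f P s1 -> y \in TG f P s2 -> ~~ eG x y.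
Proof.
move=> symH sd c1 c2 dj xT yT; apply/negP.
move=> /(edge_decomp symH sd) [u [v [t1 [t2 [[euv xP hL]|[euv yP hL]]]]]].
  have : y \in TG f P s1.
    apply: (edge_stays sd c1 xT euv xP); rewrite hL mem_cat !inE eqxx !orbT //.
  by move=> yT1; move: (TG_disj sd c1 c2 dj yT1 yT); rewrite eqxx.
have dj' : forall z, z \in s2 -> z \notin s1.
  by move=> z zs2; apply/negP => zs1; move: (dj z zs1); rewrite zs2.
have : x \in TG f P s2.
  apply: (edge_stays sd c2 yT euv yP); rewrite hL mem_cat !inE eqxx !orbT //.
by move=> xT2; move: (TG_disj sd c2 c1 dj' xT2 xT); rewrite eqxx.
Qed.


Lemma deg_sum (V : finType) (e : rel V) : \sum_(x : V) deg e x = SW e setT.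
Proof.
rewrite /SW /deg; under [RHS]eq_bigl => x do rewrite in_setT.
apply: eq_bigr => x _.
rewrite -sum1_card big_mkcond /=; under [RHS]eq_bigl => y do rewrite in_setT.
by apply: eq_bigr => y _; rewrite inE; case: (e x y).
Qed.

Lemma deg_le (V : finType) (e : rel V) : \sum_(x : V) deg e x <= #|V| * #|V|.
Proof.
rewrite -sum_nat_const; apply: leq_sum => x _; rewrite /deg.
by rewrite -[X in _ <= X]cardsT subset_leq_card // subsetT.
Qed.

Open Scope R_scope.
Lemma real_part (V : finType) (e : rel V) (k : nat) :
  (2 <= k)%N ->
  Rle (Rmult (Rmult (6 / ln 2) (INR k)) (ln (INR k))) (avg_degree e) ->
  (0 < #|V|)%N /\ (6 * k * #|V| <= \sum_(x : V) deg e x)%N.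
Proof.
move=> k2 h.
have l2 : (0 < ln 2) by rewrite -ln_1; apply: ln_increasing; lra.
have K2 : (2 <= INR k) by apply: (le_INR 2 k); apply/leP.
have lk : (ln 2 <= ln (INR k)).
  case: (Rle_lt_or_eq_dec _ _ K2) => [lt|<-]; last by lra.
  by left; apply: ln_increasing; lra.
have c6 : (6 / ln 2 * ln 2 = 6) by field; lra.
have H6 : (6 * INR k <= 6 / ln 2 * INR k * ln (INR k)).
  have c0 : (0 <= 6 / ln 2 * INR k).
    apply: Rmult_le_pos; last lra.
    apply: Rlt_le; apply: Rdiv_lt_0_compat; lra.
  have := Rmult_le_compat_l _ _ _ c0 lk.
  have -> : (6 / ln 2 * INR k * ln 2 = 6 * INR k).
    by rewrite Rmult_assoc (Rmult_comm (INR k)) -Rmult_assoc c6.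
  done.
have h' := Rle_trans _ _ _ H6 h.
move: h'; rewrite /avg_degree.
case: (posnP #|V|) => n0.
  have S0 : (\sum_(x : V) deg e x = 0)%N.
    by apply/eqP; rewrite -leqn0; have := deg_le e; rewrite n0.
  rewrite S0 n0 /Rdiv Rmult_0_l => h0.
  have : (0 < INR k) by lra.
  lra.
move=> hr; split => //.
have np : (0 < INR #|V|) by apply: lt_0_INR; apply/ltP.
have := Rmult_le_compat_r _ _ _ (Rlt_le _ _ np) hr.
have -> : INR (\sum_x deg e x) / INR #|V| * INR #|V| = INR (\sum_x deg e x).
  by field; lra.
move=> hh.
apply/leP; apply: INR_le.
rewrite !mult_INR.
have -> : INR 6 = 6 by rewrite /=; ring.
done.
Qed.

Close Scope R_scope.


Theorem mainTheorem12 :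
  exists c : R, Rlt 0 c /\
    forall k : nat, (2 <= k)%N ->
    forall (VH : finType) (eH : rel VH) (VG : finType) (eG : rel VG),
      simple_graph eH -> simple_graph eG ->
      Rle (Rmult (Rmult c (INR k)) (ln (INR k))) (avg_degree eH) ->
      strict_subdivision eH eG ->
      has_induced_k_cycles eG k.
Proof.
exists (Rdiv 6 (ln 2)); split.
  apply: Rdiv_lt_0_compat; first by apply: IZR_lt.
  by rewrite -ln_1; apply: ln_increasing; [apply: IZR_lt | apply: IZR_lt].
move=> k k2 VH eH VG eG [symH irrH] [symG irrG] hav sub.
have [n0 hS] := real_part k2 hav.
rewrite deg_sum in hS.
have hS' : (6 * k.-1 + 2) * #|[set: VH]| <= SW eH setT.
  rewrite cardsT; move: hS k2; clear; nia.
have nT : (0 < #|[set: VH]|)%N by rewrite cardsT.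
have [cs [sz acs dj]] := kcycles symH irrH hS' nT.
have kk : k.-1.+1 = k by case: k k2 {hS hS' sz dj hav}.
rewrite kk in sz dj.
case: sub => f [P [finj [prev [pne [puniq [pf [pun [_ pedge]]]]]]]].
have sd : SD eH eG f P := Build_SD finj prev pne puniq pf pun pedge.
have cycI : forall i, (i < k)%N -> cyc eH (nth [::] cs i).
  move=> i ik; have : nth [::] cs i \in cs by rewrite mem_nth // sz.
  by move=> /(allP acs) /andP [].
exists (fun i : 'I_k => TG f P (nth [::] cs i)); split.
  by move=> i; apply: TG_induced symH symG sd (cycI i (ltn_ord i)).
move=> i j ij x y xi yj.
have ci := cycI i (ltn_ord i); have cj := cycI j (ltn_ord j).
have disjH : forall z, z \in nth [::] cs i -> z \notin nth [::] cs j.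
  move=> z zi; case: (ltngtP i j) => h.
  - exact: dj h (ltn_ord j) z zi.
  - apply/negP => zj; move: (dj _ _ h (ltn_ord i) z zj); by rewrite zi.
  - by move: ij; rewrite (val_inj h) eqxx.
split; first exact: TG_disj sd ci cj disjH xi yj.
exact: TG_nonadj symH sd ci cj disjH xi yj.
Qed.
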